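(* Let $\sigma$ be a signature and let $\mathcal K$ be a nonempty class of causal teams over $\sigma$ (respectively, a nonempty class of generalized causal teams over $\sigma$). Then there is a $\mathcal{CO}[\sigma]$-formula $\varphi$ with $\mathcal K=\{T \text{ over } \sigma : T\models\varphi\}$ (satisfaction $\models^c$, respectively $\models^g$) if and only if $\mathcal K$ is flat and closed under equivalence.
   Context: A signature $\sigma=(\mathrm{Dom},\mathrm{Ran})$: $\mathrm{Dom}$ is a nonempty finite set of variables and each $X\in\mathrm{Dom}$ has a nonempty finite range $\mathrm{Ran}(X)$. For a sequence $\mathbf X=\langle X_1,\dots,X_n\rangle$, $\mathrm{Ran}(\mathbf X)=\mathrm{Ran}(X_1)\times\dots\times\mathrm{Ran}(X_n)$; for $\mathbf x\in\mathrm{Ran}(\mathbf X)$, $\mathbf X=\mathbf x$ abbreviates $X_1=x_1\wedge\dots\wedge X_n=x_n$; it is inconsistent if it contains conjuncts $X=x$, $X=x'$ with $x\neq x'$, consistent otherwise. $\mathcal{CO}[\sigma]$-formulas: $\alpha::=X=x\mid\neg\alpha\mid\alpha\wedge\alpha\mid\alpha\vee\alpha\mid\mathbf X=\mathbf x\;\Box\!\!\rightarrow\alpha$ (with $x\in\mathrm{Ran}(X)$, $\mathbf x\in\mathrm{Ran}(\mathbf X)$). An assignment is a map $s$ on $\mathrm{Dom}$ with $s(X)\in\mathrm{Ran}(X)$; $\mathbb A_\sigma$ is the set of assignments. A system of functions $\mathcal F$ assigns to each $V$ in a set $\mathrm{En}(\mathcal F)\subseteq\mathrm{Dom}$ a set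 $PA^{\mathcal F}_V\subseteq\mathrm{Dom}\setminus\{V\}$ and a function $\mathcal F_V:\mathrm{Ran}(PA^{\mathcal F}_V)\to\mathrm{Ran}(V)$; $\mathrm{Ex}(\mathcal F)=\mathrm{Dom}\setminus\mathrm{En}(\mathcal F)$. Only recursive systems (the graph with edges $X\to Y$ iff $X\in PA^{\mathcal F}_Y$ is acyclic) are considered; $\mathbb F_\sigma$ is the finite set of them. $s$ is compatible with $\mathcal F$ if $s(V)=\mathcal F_V(s(PA^{\mathcal F}_V))$ for all $V\in\mathrm{En}(\mathcal F)$; $\mathbb S_\sigma$ is the set of pairs $(s,\mathcal F)\in\mathbb A_\sigma\times\mathbb F_\sigma$ with $s$ compatible with $\mathcal F$. For consistent $\mathbf X=\mathbf x$: $\mathcal F_{\mathbf X=\mathbf x}$ is the restriction of $\mathcal F$ to $\mathrm{En}(\mathcal F)\setminus\mathbf X$, and $s^{\mathcal F}_{\mathbf X=\mathbf x}$ is defined recursively by $X_i\mapsto x_i$, $V\mapsto s(V)$ for $V\in\mathrm{Ex}(\mathcal F)\setminus\mathbf X$, $V\mapsto\mathcal F_V(s^{\mathcal F}_{\mathbf X=\mathbf x}(PA^{\mathcal F}_V))$ for $V\in\mathrm{En}(\mathcal F)\setminus\mathbf X$. A causal team is $T=(T^-,\mathcal F)$ with $\mathcal F\in\mathbb F_\sigma$ and $T^-\subseteq\mathbb A_\sigma$ consisting of assignments compatible with $\mathcal F$; all causal teams with empty team component are identified as the empty causal team $\emptyset$. $(S^-,\mathcal G)$ is a causal subteam of $(T^-,\mathcal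 F)$ if $S^-\subseteq T^-$ and $\mathcal G=\mathcal F$ ($\emptyset$ is a causal subteam of every causal team). $T_{\mathbf X=\mathbf x}=(\{s^{\mathcal F}_{\mathbf X=\mathbf x}:s\in T^-\},\mathcal F_{\mathbf X=\mathbf x})$. Satisfaction $\models^c$: $T\models X=x$ iff $s(X)=x$ for all $s\in T^-$; $T\models\neg\alpha$ iff $(\{s\},\mathcal F)\not\models\alpha$ for all $s\in T^-$; $\wedge$ as usual; $T\models\varphi\vee\psi$ iff there are causal subteams $T_1,T_2$ of $T$ with $T_1^-\cup T_2^-=T^-$, $T_1\models\varphi$, $T_2\models\psi$; $T\models\mathbf X=\mathbf x\;\Box\!\!\rightarrow\varphi$ iff $\mathbf X=\mathbf x$ is inconsistent or $T_{\mathbf X=\mathbf x}\models\varphi$. A generalized causal team is a set $T\subseteq\mathbb S_\sigma$; $T^-=\{s:(s,\mathcal F)\in T\text{ for some }\mathcal F\}$; causal subteams are subsets, unions are set unions; $T_{\mathbf X=\mathbf x}=\{(s^{\mathcal F}_{\mathbf X=\mathbf x},\mathcal F_{\mathbf X=\mathbf x}):(s,\mathcal F)\in T\}$. Satisfaction $\models^g$ has the same clauses except $T\models\neg\alpha$ iff $\{(s,\mathcal F)\}\not\models\alpha$ for all $(s,\mathcal F)\in T$, and $T\models\varphi\vee\psi$ iff $T=T_1\cup T_2$ with $T_1\models\varphi$, $T_2\models\psi$. Equivalence: $\mathrm{Cn}(\mathcal F)$ is the set of $V\in\mathrm{En}(\mathcal F)$ with $\mathcal F_V$ constant. $\mathcal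 F_V\sim\mathcal G_V$ means $\mathcal F_V(\mathbf x\mathbf y)=\mathcal G_V(\mathbf x\mathbf z)$ for all $\mathbf x\in\mathrm{Ran}(PA^{\mathcal F}_V\cap PA^{\mathcal G}_V)$, $\mathbf y\in\mathrm{Ran}(PA^{\mathcal F}_V\setminus PA^{\mathcal G}_V)$, $\mathbf z\in\mathrm{Ran}(PA^{\mathcal G}_V\setminus PA^{\mathcal F}_V)$. $\mathcal F\sim\mathcal G$ iff $\mathrm{En}(\mathcal F)\setminus\mathrm{Cn}(\mathcal F)=\mathrm{En}(\mathcal G)\setminus\mathrm{Cn}(\mathcal G)$ and $\mathcal F_V\sim\mathcal G_V$ for all $V$ in this set. Nonempty causal teams $(T^-,\mathcal F),(S^-,\mathcal G)$ are equivalent ($\approx$) iff $\mathcal F\sim\mathcal G$ and $T^-=S^-$. For a generalized causal team $T$, $T^{\mathcal F}=\{(s,\mathcal G)\in T:\mathcal G\sim\mathcal F\}$; generalized causal teams $S,T$ are equivalent iff $(S^{\mathcal F})^-=(T^{\mathcal F})^-$ for all $\mathcal F\in\mathbb F_\sigma$. A class $\mathcal K$ is closed under equivalence if $T\in\mathcal K$ and $T\approx S$ imply $S\in\mathcal K$. It is flat if: for causal teams, $(T^-,\mathcal F)\in\mathcal K$ iff $(\{s\},\mathcal F)\in\mathcal K$ for all $s\in T^-$; for generalized causal teams, $T\in\mathcal K$ iff $\{(s,\mathcal F)\}\in\mathcal K$ for all $(s,\mathcal F)\in T$. *)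

(* Defs.v *)
From HB Require Import structures.
From mathcomp Require Import all_boot.
Set Implicit Arguments.
Unset Strict Implicit.
Unset Printing Implicit Defensive.

Section CausalTeams.

(* A signature sigma = (Dom, Ran): variables form the finite type V, all
   values live in a common finite type D, and Ran X : {set D} is the range
   of X.  Nonemptiness of Dom and of each range is a hypothesis of the
   theorem. *)
Variables (V D : finType) (Ran : V -> {set D}).

Definition assignment := {f : {ffun V -> D} | [forall X, f X \in Ran X]}.

(* Raw systems of functions: parent sets PA and, for each variable, either
   None (exogenous) or Some f, where f : assignments -> D encodes
   F_V : Ran(PA_V) -> Ran(V) (f must depend only on the PA_V-coordinates). *)
Definition sysraw :=
  ({ffun V -> {set V}} * {ffun V -> option {ffun assignment -> D}})%type.

Definition PA (F : sysraw) (X : V) : {set V} := F.1 X.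
Definition fn (F : sysraw) (X : V) : option {ffun assignment -> D} := F.2 X.

Definition En (F : sysraw) : {set V} := [set X | fn F X].

Definition edge (F : sysraw) : rel V := fun X Y => X \in PA F Y.

Definition sys_wf (F : sysraw) : bool :=
  [forall X, (X \notin En F) ==> (PA F X == set0)] &&
  [forall X, X \notin PA F X] &&
  [forall X, if fn F X is Some f then
               [forall s : assignment, f s \in Ran X] &&
               [forall s : assignment, forall t : assignment,
                  [forall Y in PA F X, val s Y == val t Y] ==> (f s == f t)]
             else true] &&
  [forall X, forall Y, edge F X Y ==> ~~ connect (edge F) Y X].

Definition compatible (s : assignment) (F : sysraw) : bool :=
  [forall X, if fn F X is Some f then val s X == f s else true].

Definition ivars (xs : seq (V * D)) : seq V := [seq p.1 | p <- xs].

Definition consistent (xs : seq (V * D)) : bool :=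
  all (fun p => all (fun q => (p.1 == q.1) ==> (p.2 == q.2)) xs) xs.

(* the value assigned to Y by xs (meaningful when Y occurs in xs) *)
Definition ival (xs : seq (V * D)) (Y : V) (d : D) : D :=
  (nth (Y, d) xs (find (fun p => p.1 == Y) xs)).2.

Definition sys_interv (F : sysraw) (xs : seq (V * D)) : sysraw :=
  ([ffun Y => if Y \in ivars xs then set0 else PA F Y],
   [ffun Y => if Y \in ivars xs then None else fn F Y]).

Definition interv_eqs (F : sysraw) (xs : seq (V * D)) (s t : assignment) : bool :=
  [forall Y, if Y \in ivars xs then val t Y == ival xs Y (val s Y)
             else if fn F Y is Some f then val t Y == f t
             else val t Y == val s Y].

(* s^F_{X=x}: the assignment satisfying the recursive clauses (it exists
   and is unique for recursive F and consistent xs with values in range) *)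
Definition asg_interv (F : sysraw) (xs : seq (V * D)) (s : assignment)
  : assignment :=
  odflt s [pick t | interv_eqs F xs s t].

Inductive formula : Type :=
  | Atom of V & D
  | Neg of formula
  | And of formula & formula
  | Or of formula & formula
  | Cf of seq (V * D) & formula.

Fixpoint wff (phi : formula) : bool :=
  match phi with
  | Atom X x => x \in Ran X
  | Neg a => wff a
  | And a b => wff a && wff b
  | Or a b => wff a && wff b
  | Cf xs a => (0 < size xs) && all (fun p => p.2 \in Ran p.1) xs && wff a
  end.

Definition cteam_wf (T : {set assignment}) (F : sysraw) : Prop :=
  sys_wf F /\ forall s, s \in T -> compatible s F.

Fixpoint csat (phi : formula) (T : {set assignment}) (F : sysraw) : Prop :=
  match phi with
  | Atom X x => forall s, s \in T -> val s X = x
  | Neg a => forall s, s \in T -> ~ csat a [set s] F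
  | And a b => csat a T F /\ csat b T F
  | Or a b => exists T1 T2 : {set assignment},
      [/\ T1 \subset T, T2 \subset T, T1 :|: T2 = T, csat a T1 F & csat b T2 F]
  | Cf xs a => ~~ consistent xs \/
      csat a [set asg_interv F xs s | s in T] (sys_interv F xs)
  end.

Definition gteam_wf (T : {set (assignment * sysraw)}) : Prop :=
  forall p, p \in T -> sys_wf p.2 /\ compatible p.1 p.2.

Fixpoint gsat (phi : formula) (T : {set (assignment * sysraw)}) : Prop :=
  match phi with
  | Atom X x => forall p, p \in T -> val p.1 X = x
  | Neg a => forall p, p \in T -> ~ gsat a [set p]
  | And a b => gsat a T /\ gsat b T
  | Or a b => exists T1 T2 : {set (assignment * sysraw)},
      [/\ T1 :|: T2 = T, gsat a T1 & gsat b T2]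
  | Cf xs a => ~~ consistent xs \/
      gsat a [set (asg_interv p.2 xs p.1, sys_interv p.2 xs) | p in T]
  end.

Definition Cn (F : sysraw) : {set V} :=
  [set X | if fn F X is Some f then [forall s : assignment, forall t : assignment, f s == f t] else false].

Definition fn_sim (F G : sysraw) (X : V) : bool :=
  match fn F X, fn G X with
  | Some f, Some g =>
      [forall s : assignment, forall t : assignment,
         [forall Y in PA F X :&: PA G X, val s Y == val t Y] ==> (f s == g t)]
  | _, _ => false
  end.

Definition sys_equiv (F G : sysraw) : bool :=
  (En F :\: Cn F == En G :\: Cn G) &&
  [forall X in En F :\: Cn F, fn_sim F G X].

Definition proj (T : {set (assignment * sysraw)}) : {set assignment} :=
  [set p.1 | p in T].

Definition restr (T : {set (assignment * sysraw)}) (F : sysraw) :=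
  [set p in T | sys_equiv p.2 F].

Definition gequiv (S T : {set (assignment * sysraw)}) : Prop :=
  forall F, sys_wf F -> proj (restr S F) = proj (restr T F).

(* a class of causal teams over sigma (empty causal teams identified) *)
Definition cclass (K : {set assignment} -> sysraw -> Prop) : Prop :=
  (forall T F, K T F -> cteam_wf T F) /\
  (forall F G, cteam_wf set0 F -> cteam_wf set0 G -> K set0 F -> K set0 G).

Definition cflat (K : {set assignment} -> sysraw -> Prop) : Prop :=
  forall T F, cteam_wf T F -> (K T F <-> forall s, s \in T -> K [set s] F).

Definition cclosed (K : {set assignment} -> sysraw -> Prop) : Prop :=
  forall T F S G, cteam_wf T F -> cteam_wf S G ->
    T != set0 -> S != set0 -> sys_equiv F G -> T = S -> K T F -> K S G.

Definition gclass (K : {set (assignment * sysraw)} -> Prop) : Prop :=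
  forall T, K T -> gteam_wf T.

Definition gflat (K : {set (assignment * sysraw)} -> Prop) : Prop :=
  forall T, gteam_wf T -> (K T <-> forall p, p \in T -> K [set p]).

Definition gclosed (K : {set (assignment * sysraw)} -> Prop) : Prop :=
  forall T S, gteam_wf T -> gteam_wf S -> gequiv T S -> K T -> K S.

End CausalTeams.

(* Main.v *)
From Stdlib Require Import ClassicalEpsilon.
Require Import Defs.
From HB Require Import structures.
From mathcomp Require Import all_boot.

Set Implicit Arguments.
Unset Strict Implicit.
Unset Printing Implicit Defensive.

Definition pb (P : Prop) : bool :=
  if excluded_middle_informative P then true else false.
Lemma pbP (P : Prop) : reflect P (pb P).
Proof. rewrite /pb; case: excluded_middle_informative => h; by constructor. Qed.

Section Proofs.
Variables (V D : finType) (Ran : V -> {set D}).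
Local Notation asg := (assignment Ran).
Local Notation sys := (sysraw Ran).
Local Notation form := (formula V D).

Lemma csat_flat (phi : form) : forall (T : {set asg}) (F : sys),
  csat phi T F <-> (forall s, s \in T -> csat phi [set s] F).
Proof.
elim: phi => [X x|a IH|a IHa b IHb|a IHa b IHb|xs a IH] T F /=.
- split=> [H s sT s' /set1P -> | H s sT]; first exact: H.
  exact: (H s sT s (set11 s)).
- split=> [H s sT s' /set1P -> | H s sT]; first exact: H.
  exact: (H s sT s (set11 s)).
- split=> [[H1 H2] s sT|H]; first by split; [apply: (proj1 (IHa T F) H1)|apply: (proj1 (IHb T F) H2)].
  split; [apply/IHa|apply/IHb] => s sT; by case: (H s sT).
- split=> [[T1 [T2 [s1 s2 U H1 H2]]] s sT | H].
  + have: s \in T1 :|: T2 by rewrite U.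
    case/setUP => sTi.
    * exists [set s], set0; split; rewrite ?sub0set ?setU0 //.
      - exact: (proj1 (IHa T1 F) H1 s sTi).
      - by apply/(IHb set0 F) => u; rewrite in_set0.
    * exists set0, [set s]; split; rewrite ?sub0set ?set0U //.
      - by apply/(IHa set0 F) => u; rewrite in_set0.
      - exact: (proj1 (IHb T2 F) H2 s sTi).
  + exists [set s in T | pb (csat a [set s] F)], [set s in T | pb (csat b [set s] F)].
    split.
    * by apply/subsetP => u; rewrite inE => /andP[].
    * by apply/subsetP => u; rewrite inE => /andP[].
    * apply/setP => u; rewrite !inE. case uT: (u \in T) => //=.
      case: (H u uT) => T1 [T2 [s1 s2 U H1 H2]].
      have: u \in T1 :|: T2 by rewrite U set11.
      case/setUP => uTi.
      - by apply/orP; left; apply/pbP; exact: (proj1 (IHa T1 F) H1 u uTi).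
      - by apply/orP; right; apply/pbP; exact: (proj1 (IHb T2 F) H2 u uTi).
    * by apply/IHa => u; rewrite inE => /andP[_ /pbP].
    * by apply/IHb => u; rewrite inE => /andP[_ /pbP].
- split=> [[Hc|H] s sT|H]; [by left | |].
  + right. rewrite imset_set1. apply: (proj1 (IH _ _) H). by apply/imsetP; exists s.
  + case Hc: (consistent xs); last by left.
    right. apply/IH => u /imsetP [s sT ->].
    case: (H s sT) => [|]; first by rewrite Hc.
    by rewrite imset_set1.
Qed.

Lemma gsat_flat (phi : form) : forall (T : {set asg * sys}),
  gsat phi T <-> (forall p, p \in T -> gsat phi [set p]).
Proof.
elim: phi => [X x|a IH|a IHa b IHb|a IHa b IHb|xs a IH] T /=.
- split=> [H s sT s' /set1P -> | H s sT]; first exact: H.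
  exact: (H s sT s (set11 s)).
- split=> [H s sT s' /set1P -> | H s sT]; first exact: H.
  exact: (H s sT s (set11 s)).
- split=> [[H1 H2] s sT|H]; first by split; [apply: (proj1 (IHa T) H1)|apply: (proj1 (IHb T) H2)].
  split; [apply/IHa|apply/IHb] => s sT; by case: (H s sT).
- split=> [[T1 [T2 [U H1 H2]]] s sT | H].
  + have: s \in T1 :|: T2 by rewrite U.
    case/setUP => sTi.
    * exists [set s], set0; split; rewrite ?setU0 //.
      - exact: (proj1 (IHa T1) H1 s sTi).
      - by apply/(IHb set0) => u; rewrite in_set0.
    * exists set0, [set s]; split; rewrite ?set0U //.
      - by apply/(IHa set0) => u; rewrite in_set0.
      - exact: (proj1 (IHb T2) H2 s sTi).
  + exists [set s in T | pb (gsat a [set s])], [set s in T | pb (gsat b [set s])].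
    split.
    * apply/setP => u; rewrite !inE. case uT: (u \in T) => //=.
      case: (H u uT) => T1 [T2 [U H1 H2]].
      have: u \in T1 :|: T2 by rewrite U set11.
      case/setUP => uTi.
      - by apply/orP; left; apply/pbP; exact: (proj1 (IHa T1) H1 u uTi).
      - by apply/orP; right; apply/pbP; exact: (proj1 (IHb T2) H2 u uTi).
    * by apply/IHa => u; rewrite inE => /andP[_ /pbP].
    * by apply/IHb => u; rewrite inE => /andP[_ /pbP].
- split=> [[Hc|H] s sT|H]; [by left | |].
  + right. rewrite imset_set1. apply: (proj1 (IH _) H). by apply/imsetP; exists s.
  + case Hc: (consistent xs); last by left.
    right. apply/IH => u /imsetP [s sT ->].
    case: (H s sT) => [|]; first by rewrite Hc.
    by rewrite imset_set1.
Qed.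

Lemma csat0 (phi : form) (F : sys) : csat phi set0 F.
Proof. by apply/csat_flat => s; rewrite in_set0. Qed.
Lemma gsat0 (phi : form) : @gsat _ _ Ran phi set0.
Proof. by apply/gsat_flat => s; rewrite in_set0. Qed.

Lemma csat_or1 (a b : form) (s : asg) (F : sys) :
  csat (Or a b) [set s] F <-> csat a [set s] F \/ csat b [set s] F.
Proof.
split=> [[T1 [T2 [s1 s2 U H1 H2]]]|[H|H]].
- have: s \in T1 :|: T2 by rewrite U set11.
  case/setUP => sTi; [left; exact: (proj1 (csat_flat a T1 F) H1 s sTi)
                     |right; exact: (proj1 (csat_flat b T2 F) H2 s sTi)].
- exists [set s], set0; split; rewrite ?sub0set ?setU0 //; exact: csat0.
- exists set0, [set s]; split; rewrite ?sub0set ?set0U //; exact: csat0.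
Qed.

Lemma gsat_or1 (a b : form) (p : asg * sys) :
  gsat (Or a b) [set p] <-> gsat a [set p] \/ gsat b [set p].
Proof.
split=> [[T1 [T2 [U H1 H2]]]|[H|H]].
- have: p \in T1 :|: T2 by rewrite U set11.
  case/setUP => sTi; [left; exact: (proj1 (gsat_flat a T1) H1 p sTi)
                     |right; exact: (proj1 (gsat_flat b T2) H2 p sTi)].
- exists [set p], set0; split; rewrite ?setU0 //; exact: gsat0.
- exists set0, [set p]; split; rewrite ?set0U //; exact: gsat0.
Qed.

Lemma g_c (phi : form) : forall (s : asg) (F : sys), gsat phi [set (s, F)] <-> csat phi [set s] F.
Proof.
elim: phi => [X x|a IH|a IHa b IHb|a IHa b IHb|xs a IH] s F.
- split=> /= H u.
  + move/set1P => ->. exact: (H (s, F) (set11 _)).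
  + move/set1P => ->. exact: (H s (set11 _)).
- split=> /= H u.
  + move/set1P => -> . rewrite -IH. exact: (H (s, F) (set11 _)).
  + move/set1P => -> . rewrite IH. exact: (H s (set11 _)).
- by rewrite /= IHa IHb.
- by rewrite gsat_or1 csat_or1 IHa IHb.
- by rewrite /= !imset_set1 IH.
Qed.


Lemma wf_notPA (F : sys) X Y : sys_wf F -> Y \in PA F X -> Y != X.
Proof.
move=> /andP[/andP[/andP[_ /forallP h2] _] _] YP.
apply/eqP => e; subst. by move: (h2 X); rewrite YP.
Qed.

Lemma wf_fn (F : sys) X f : sys_wf F -> fn F X = Some f ->
  (forall s, f s \in Ran X) /\
  (forall s t : asg, (forall Y, Y \in PA F X -> val s Y = val t Y) -> f s = f t).
Proof.
move=> /andP[/andP[/andP[_ _] /forallP h3] _] e.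
move: (h3 X); rewrite e => /andP[/forallP r /forallP d]; split=> // s t H.
apply/eqP; move: (d s) => /forallP /(_ t) /implyP; apply.
by apply/forall_inP => Y /H ->.
Qed.

Lemma compatE (s : asg) (F : sys) X f : compatible s F -> fn F X = Some f -> val s X = f s.
Proof. by move=> /forallP /(_ X) + e; rewrite e => /eqP. Qed.

Definition EC (F : sys) := En F :\: Cn F.

Definition cv (F : sys) (s : asg) Y (t : asg) :=
  if fn F Y is Some f then f t else val s Y.

Lemma cv_nEC (s : asg) (F : sys) Y t : compatible s F -> Y \notin EC F -> cv F s Y t = val s Y.
Proof.
move=> cF; rewrite /EC /cv !inE.
case e: (fn F Y) => [f|] //=; rewrite andbT negbK => /forallP H.
rewrite (compatE cF e); apply/eqP; move: (H t) => /forallP /(_ s) //.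
Qed.

Lemma cv_eq (s : asg) (F G : sys) Y t : compatible s F -> compatible s G -> sys_equiv F G ->
  cv F s Y t = cv G s Y t.
Proof.
move=> cF cG /andP[/eqP E /forall_inP H].
case: (boolP (Y \in EC F)) => YF.
- move: (H Y YF); rewrite /fn_sim /cv.
  case: (fn F Y) => [f|] //; case: (fn G Y) => [g|] //.
  move=> /forallP /(_ t) /forallP /(_ t) /implyP h; apply/eqP; apply: h.
  by apply/forall_inP.
- have YG : Y \notin EC G by rewrite /EC -E.
  by rewrite (cv_nEC t cF YF); symmetry; apply: cv_nEC.
Qed.

Lemma interv_eqs_eq (s : asg) (F G : sys) xs : compatible s F -> compatible s G -> sys_equiv F G ->
  interv_eqs F xs s =1 interv_eqs G xs s.
Proof.
move=> cF cG E t; rewrite /interv_eqs; apply: eq_forallb => Y.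
case: ifP => // _. have := cv_eq Y t cF cG E; rewrite /cv.
by case: (fn F Y) => [f|]; case: (fn G Y) => [g|] /= e; rewrite ?e.
Qed.

Lemma asg_interv_eq (s : asg) (F G : sys) xs : compatible s F -> compatible s G -> sys_equiv F G ->
  asg_interv F xs s = asg_interv G xs s.
Proof.
move=> cF cG E; rewrite /asg_interv; congr (odflt _ _).
exact: eq_pick (interv_eqs_eq xs cF cG E).
Qed.

Lemma fn_interv (F : sys) xs Y : fn (sys_interv F xs) Y = if Y \in ivars xs then None else fn F Y.
Proof. by rewrite /fn /sys_interv /= ffunE. Qed.
Lemma PA_interv (F : sys) xs Y : PA (sys_interv F xs) Y = if Y \in ivars xs then set0 else PA F Y.
Proof. by rewrite /PA /sys_interv /= ffunE. Qed.

Lemma EC_interv (F : sys) xs Y : (Y \in EC (sys_interv F xs)) = (Y \notin ivars xs) && (Y \in EC F).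
Proof.
rewrite /EC /Cn /En !inE fn_interv.
by case: ifP => //=.
Qed.

Lemma equiv_interv (F G : sys) xs : sys_equiv F G -> sys_equiv (sys_interv F xs) (sys_interv G xs).
Proof.
move=> /andP[/eqP E /forall_inP H]; apply/andP; split.
- apply/eqP/setP => Y. have := EC_interv F xs Y; rewrite /EC => ->.
  have := EC_interv G xs Y; rewrite /EC => ->. by rewrite E.
- apply/forall_inP => Y. have := EC_interv F xs Y; rewrite /EC => -> /andP[nY YF].
  rewrite /fn_sim !fn_interv !PA_interv (negbTE nY). exact: H.
Qed.

Lemma compat_interv (s : asg) (F : sys) xs : compatible s F ->
  compatible (asg_interv F xs s) (sys_interv F xs).
Proof.
move=> cF; rewrite /asg_interv; case: pickP => [u Hu|_] /=.
- apply/forallP => Y; rewrite fn_interv; case: ifP => // nY.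
  move: Hu => /forallP /(_ Y); rewrite nY. by case: (fn F Y).
- apply/forallP => Y; rewrite fn_interv; case: ifP => // nY.
  by move: cF => /forallP /(_ Y).
Qed.

Lemma c_equiv (phi : form) : forall (s : asg) (F G : sys),
  compatible s F -> compatible s G -> sys_equiv F G ->
  (csat phi [set s] F <-> csat phi [set s] G).
Proof.
elim: phi => [X x|a IH|a IHa b IHb|a IHa b IHb|xs a IH] s F G cF cG E.
- by [].
- split=> /= H u /set1P ->; [rewrite -(IH s F G) | rewrite (IH s F G)] => //; exact: H _ (set11 _).
- by rewrite /= (IHa s F G) // (IHb s F G).
- by rewrite !csat_or1 (IHa s F G) // (IHb s F G).
- rewrite /= !imset_set1 (asg_interv_eq xs cF cG E).
  rewrite (IH _ (sys_interv F xs) (sys_interv G xs)) //.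
  + rewrite -(asg_interv_eq xs cF cG E); exact: compat_interv.
  + exact: compat_interv.
  + exact: equiv_interv.
Qed.


Lemma asgR (a : asg) Y : val a Y \in Ran Y.
Proof. exact: (forallP (valP a) Y). Qed.

Lemma mix_proof (A : {set V}) (a b : asg) :
  [forall Y, [ffun Y => if Y \in A then val a Y else val b Y] Y \in Ran Y].
Proof. apply/forallP => Y; rewrite ffunE; case: ifP => _; exact: asgR. Qed.

Definition mix (A : {set V}) (a b : asg) : asg :=
  exist (fun f : {ffun V -> D} => is_true [forall X, f X \in Ran X]) _ (mix_proof A a b).

Lemma mixE A a b Y : val (mix A a b) Y = if Y \in A then val a Y else val b Y.
Proof. by rewrite /mix /= ffunE. Qed.

Lemma fn_sim_ext (F G : sys) X f g : sys_wf F -> sys_wf G ->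
  fn F X = Some f -> fn G X = Some g ->
  fn_sim F G X = [forall a, f a == g a].
Proof.
move=> wF wG eF eG; rewrite /fn_sim eF eG; apply/idP/idP.
- move/forallP => H; apply/forallP => a; move: (H a) => /forallP /(_ a) /implyP; apply.
  by apply/forall_inP.
- move/forallP => H; apply/forallP => a; apply/forallP => b; apply/implyP => /forall_inP Hab.
  have [_ dF] := wf_fn wF eF; have [_ dG] := wf_fn wG eG.
  rewrite (dF a (mix (PA F X) a b)); last by move=> Y YP; rewrite mixE YP.
  rewrite (eqP (H _)); apply/eqP; apply: dG => Y YP; rewrite mixE.
  case: ifP => // YF; apply/eqP; apply: Hab; by rewrite inE YF YP.
Qed.

Definition nf (F : sys) X := if X \in EC F then fn F X else None.

Lemma EC_some (F : sys) X : X \in EC F ->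
  exists f, fn F X = Some f /\ ~~ [forall a, forall b, f a == f b].
Proof.
rewrite /EC /Cn /En !inE; case: (fn F X) => [f|] //=; rewrite andbT => h; by exists f.
Qed.

Lemma EC_nf (F : sys) X : (X \in EC F) = isSome (nf F X).
Proof.
rewrite /nf; case: ifP => h //. by case: (EC_some h) => f [-> _].
Qed.

Lemma nf_some (F : sys) X f : nf F X = Some f ->
  fn F X = Some f /\ ~~ [forall a, forall b, f a == f b].
Proof.
rewrite /nf; case: ifP => h // e. case: (EC_some h) => f' [e' H]. 
move: e; rewrite e' => -[<-]; by split.
Qed.

Lemma equiv_nf (F G : sys) : sys_wf F -> sys_wf G ->
  sys_equiv F G <-> (forall X, nf F X = nf G X).
Proof.
move=> wF wG; split.
- move=> /andP[/eqP E /forall_inP H] X. rewrite /nf.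
  have EE : EC F = EC G by [].
  rewrite EE; case: ifP => XG //.
  have XF : X \in EC F by rewrite EE.
  case: (EC_some XF) => f [eF _]; case: (EC_some XG) => g [eG _].
  have := H X XF; rewrite (fn_sim_ext wF wG eF eG) eF eG => /forallP h.
  by congr Some; apply/ffunP => a; apply/eqP.
- move=> H; apply/andP; split.
  + apply/eqP/setP => X. change ((X \in EC F) = (X \in EC G)). by rewrite !EC_nf H.
  + apply/forall_inP => X XF0. have XF : X \in EC F := XF0.
    have XG : X \in EC G by rewrite EC_nf -H -EC_nf.
    case: (EC_some XF) => f [eF _]; case: (EC_some XG) => g [eG _].
    rewrite (fn_sim_ext wF wG eF eG).
    have := H X; rewrite /nf XF XG eF eG => -[->]. by apply/forallP.
Qed.

Lemma equiv_refl (F : sys) : sys_wf F -> sys_equiv F F.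
Proof. by move=> wF; apply/equiv_nf. Qed.

Lemma equiv_trans (F G H : sys) : sys_wf F -> sys_wf G -> sys_wf H ->
  sys_equiv F G -> sys_equiv F H = sys_equiv G H.
Proof.
move=> wF wG wH /(equiv_nf wF wG) e; apply/idP/idP.
- move/(equiv_nf wF wH) => e'; apply/(equiv_nf wG wH) => X; by rewrite -e e'.
- move/(equiv_nf wG wH) => e'; apply/(equiv_nf wF wH) => X; by rewrite e e'.
Qed.

Lemma valF_nf (s : asg) (F : sys) X w : compatible s F ->
  cv F s X w = match nf F X with Some f => f w | None => val s X end.
Proof.
move=> cF; rewrite /nf; case: ifP => h.
- by case: (EC_some h) => f [e _]; rewrite /cv e.
- by rewrite (cv_nEC w cF) // h.
Qed.

Lemma cv_equiv (s : asg) (F G : sys) : sys_wf F -> sys_wf G ->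
  compatible s F -> compatible s G ->
  (forall X w, cv F s X w = cv G s X w) <-> sys_equiv F G.
Proof.
move=> wF wG cF cG; split; last by move=> E X w; exact: cv_eq.
move=> H; apply/(equiv_nf wF wG) => X.
have h : forall w, (match nf F X with Some f => f w | None => val s X end)
  = (match nf G X with Some f => f w | None => val s X end).
  by move=> w; rewrite -(valF_nf X w cF) -(valF_nf X w cG); exact: H.
case eF: (nf F X) => [f|]; case eG: (nf G X) => [g|]; rewrite eF eG in h.
- by congr Some; apply/ffunP => w; exact: h.
- case: (nf_some eF) => _ /negP []; apply/forallP => a; apply/forallP => b; by rewrite !h.
- case: (nf_some eG) => _ /negP []; apply/forallP => a; apply/forallP => b; by rewrite -!h.
- done.
Qed.


Definition xs_of (X : V) (w : asg) : seq (V * D) :=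
  map (fun Y => (Y, val w Y)) [seq Y <- enum V | Y != X].

Lemma mem_ivars X w Y : (Y \in ivars (xs_of X w)) = (Y != X).
Proof.
rewrite /ivars /xs_of -map_comp.
have -> : [seq ((fun p : V * D => p.1) \o (fun Y0 => (Y0, val w Y0))) i | i <- [seq Y0 <- enum V | Y0 != X]]
  = [seq Y0 <- enum V | Y0 != X] by elim: [seq Y0 <- enum V | Y0 != X] => //= a l ->.
by rewrite mem_filter mem_enum andbT.
Qed.

Lemma ival_xs X w Y d : Y != X -> ival (xs_of X w) Y d = val w Y.
Proof.
move=> YX; rewrite /ival.
set xs := xs_of X w.
have hs : has (fun p : V * D => p.1 == Y) xs.
  apply/hasP; exists (Y, val w Y) => //.
  by apply/mapP; exists Y => //; rewrite mem_filter YX mem_enum.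
have := nth_find (Y, d) hs.
have : nth (Y, d) xs (find (fun p : V * D => p.1 == Y) xs) \in xs
  by apply: mem_nth; rewrite -has_find.
move=> /mapP [Y' _ ->] /= /eqP -> //.
Qed.

Lemma consistent_xs X w : consistent (xs_of X w).
Proof.
apply/allP => p /mapP [Y _ ->]; apply/allP => q /mapP [Y' _ ->] /=.
by apply/implyP => /eqP ->.
Qed.

Lemma cv_rng (s : asg) (F : sys) X w : sys_wf F -> cv F s X w \in Ran X.
Proof.
move=> wF; rewrite /cv; case e: (fn F X) => [f|]; last exact: asgR.
by case: (wf_fn wF e) => r _; apply: r.
Qed.

Lemma sol_char (G : sys) (t w u : asg) X : sys_wf G ->
  interv_eqs G (xs_of X w) t u ->
  (forall Y, Y != X -> val u Y = val w Y) /\ val u X = cv G t X w.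
Proof.
move=> wG /forallP Hu.
have h1 : forall Y, Y != X -> val u Y = val w Y.
  move=> Y YX; move: (Hu Y); rewrite mem_ivars YX => /eqP ->; exact: ival_xs.
split=> //.
move: (Hu X); rewrite mem_ivars eqxx /= /cv.
case e: (fn G X) => [g|] /eqP -> //.
case: (wf_fn wG e) => _ d; apply: d => Y YP; apply: h1; exact: (wf_notPA wG YP).
Qed.

Lemma sol_proof (G : sys) (t w : asg) X : sys_wf G ->
  [forall Y, [ffun Y => if Y == X then cv G t X w else val w Y] Y \in Ran Y].
Proof.
move=> wG; apply/forallP => Y; rewrite ffunE; case: ifP => [/eqP ->|_]; last exact: asgR.
exact: cv_rng.
Qed.

Definition solu (G : sys) (t w : asg) X (wG : sys_wf G) : asg :=
  exist (fun f : {ffun V -> D} => is_true [forall Z, f Z \in Ran Z]) _ (sol_proof t w X wG).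

Lemma sol_exists (G : sys) (t w : asg) X : sys_wf G ->
  exists u, interv_eqs G (xs_of X w) t u.
Proof.
move=> wG.
exists (solu t w X wG).
apply/forallP => Y /=; rewrite mem_ivars !ffunE.
case: (boolP (Y == X)) => [/eqP ->|YX] /=.
- rewrite /cv; case e: (fn G X) => [g|] //.
  apply/eqP; case: (wf_fn wG e) => _ d; apply: d => Z ZP.
  by rewrite /= ffunE (negbTE (wf_notPA wG ZP)).
- by rewrite ival_xs.
Qed.

Lemma interv_val (G : sys) (t w : asg) X : sys_wf G ->
  val (asg_interv G (xs_of X w) t) X = cv G t X w.
Proof.
move=> wG; rewrite /asg_interv; case: pickP => [u Hu|H] /=.
- by case: (sol_char wG Hu).
- case: (sol_exists t w X wG) => u Hu. by move: (H u); rewrite Hu.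
Qed.

Definition cf (xs : seq (V * D)) (a : form) : form :=
  if xs is [::] then a else Cf xs a.

Lemma cf_sat (G : sys) (t w : asg) X c : sys_wf G -> compatible t G ->
  csat (cf (xs_of X w) (Atom X c)) [set t] G <-> cv G t X w = c.
Proof.
move=> wG cG; rewrite /cf; case E: (xs_of X w) => [|p l].
- have allX : forall Y, Y = X.
    move=> Y; apply/eqP; apply/negPn/negP => YX.
    have : (Y, val w Y) \in xs_of X w by apply/mapP; exists Y => //; rewrite mem_filter YX mem_enum.
    by rewrite E.
  have -> : cv G t X w = val t X.
    rewrite /cv; case e: (fn G X) => [g|] //.
    rewrite (compatE cG e); case: (wf_fn wG e) => _ d; apply: d => Y YP.
    by move: (wf_notPA wG YP); rewrite (allX Y) eqxx.
  split=> [H|<- u /set1P -> //]; exact: H t (set11 t).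
- rewrite -E /= imset_set1 consistent_xs /=.
  split=> [[//|H]|H]; last by right => u /set1P ->; rewrite interv_val.
  by rewrite -(interv_val t w X wG); apply: H; apply: set11.
Qed.

Definition bigAnd (I : Type) (l : seq I) (f : I -> form) (b : form) : form :=
  foldr (fun x acc => And (f x) acc) b l.
Definition bigOr (I : Type) (l : seq I) (f : I -> form) (b : form) : form :=
  foldr (fun x acc => Or (f x) acc) b l.

Lemma bigAnd_sat (I : eqType) (l : seq I) f b T (F : sys) :
  csat (bigAnd l f b) T F <-> csat b T F /\ (forall x, x \in l -> csat (f x) T F).
Proof.
elim: l => [|x l IH] /=; first by split=> [H|[]//]; split.
rewrite IH; split=> [[h1 [h2 h3]]|[h2 h3]].
- split=> // y; rewrite inE => /orP[/eqP ->//|]; exact: h3.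
- split; first by apply: h3; rewrite inE eqxx.
  split=> // y yl; apply: h3; by rewrite inE yl orbT.
Qed.

Lemma bigOr_sat (I : eqType) (l : seq I) f b (t : asg) (F : sys) :
  csat (bigOr l f b) [set t] F <-> csat b [set t] F \/ (exists x, x \in l /\ csat (f x) [set t] F).
Proof.
elim: l => [|x l IH].
  by split=> [H|[//|[x []]]]; [left|rewrite in_nil].
change (csat (Or (f x) (bigOr l f b)) [set t] F <->
  csat b [set t] F \/ (exists y, y \in x :: l /\ csat (f y) [set t] F)).
rewrite csat_or1 IH; split=> [[h|[h|[y [yl h]]]]|[h|[y [yl h]]]].
- by right; exists x; rewrite inE eqxx.
- by left.
- by right; exists y; rewrite inE yl orbT.
- by right; left.
- move: yl; rewrite inE => /orP[/eqP <-|yl]; first by left.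
  by right; right; exists y.
Qed.

Lemma bigAnd_wff (I : eqType) (l : seq I) f b :
  wff Ran b -> (forall x, x \in l -> wff Ran (f x)) -> wff Ran (bigAnd l f b).
Proof.
move=> wb; elim: l => [|x l IH] //= H.
rewrite H ?inE ?eqxx // IH // => y yl; apply: H; by rewrite inE yl orbT.
Qed.

Lemma bigOr_wff (I : eqType) (l : seq I) f b :
  wff Ran b -> (forall x, x \in l -> wff Ran (f x)) -> wff Ran (bigOr l f b).
Proof.
move=> wb; elim: l => [|x l IH] //= H.
rewrite H ?inE ?eqxx // IH // => y yl; apply: H; by rewrite inE yl orbT.
Qed.

Lemma cf_wff X w c : c \in Ran X -> wff Ran (cf (xs_of X w) (Atom X c)).
Proof.
move=> cR; rewrite /cf; case E: (xs_of X w) => [|p l] //=.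
rewrite cR andbT /=.
have : all (fun q : V * D => q.2 \in Ran q.1) (xs_of X w).
  apply/allP => q /mapP [Y _ ->]; exact: asgR.
by rewrite E.
Qed.

Section Chi.
Variable X0 : V.

Definition chi (s : asg) (F : sys) : form :=
  And (bigAnd (enum V) (fun X => Atom X (val s X)) (Atom X0 (val s X0)))
      (bigAnd (enum V) (fun X => bigAnd (enum {: asg})
          (fun w => cf (xs_of X w) (Atom X (cv F s X w))) (Atom X0 (val s X0)))
        (Atom X0 (val s X0))).

Lemma chi_wff s F : sys_wf F -> wff Ran (chi s F).
Proof.
move=> wF; rewrite /chi /=; apply/andP; split.
- apply: bigAnd_wff => [|X _]; exact: asgR.
- apply: bigAnd_wff => [|X _]; first exact: asgR.
  apply: bigAnd_wff => [|w _]; first exact: asgR.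
  apply: cf_wff; exact: cv_rng.
Qed.

Lemma chi_sat (s t : asg) (F G : sys) : sys_wf F -> compatible s F ->
  sys_wf G -> compatible t G ->
  csat (chi s F) [set t] G <-> t = s /\ sys_equiv F G.
Proof.
move=> wF cF wG cG; rewrite /chi /= !bigAnd_sat; split.
- move=> [[_ Ha] [_ Hc]].
  have ts : t = s.
    apply/val_inj/ffunP => X. exact: (Ha X (mem_enum _ _) t (set11 t)).
  subst t; split=> //.
  apply/(cv_equiv wF wG cF cG) => X w.
  have := Hc X (mem_enum _ _); rewrite bigAnd_sat => -[_ H].
  by move: (H w (mem_enum _ _)); rewrite cf_sat // => ->.
- move=> [ts E]; subst t.
  split; first by split=> [u /set1P -> //|X _ u /set1P ->].
  split; first by move=> u /set1P ->.
  move=> X _; rewrite bigAnd_sat; split; first by move=> u /set1P ->.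
  move=> w _; rewrite cf_sat //; symmetry; exact: cv_eq.
Qed.

Variable x0 : D.
Definition Bot : form := And (Atom X0 x0) (Neg (Atom X0 x0)).

Lemma Bot_sat (t : asg) (G : sys) : ~ csat Bot [set t] G.
Proof.
move=> [h1 h2]; apply: (h2 t (set11 t)) => u /set1P ->; exact: h1 t (set11 t).
Qed.

Definition Phi (L : seq (asg * sys)) : form := bigOr L (fun p => chi p.1 p.2) Bot.

Lemma Phi_wff L : x0 \in Ran X0 -> (forall p, p \in L -> sys_wf p.2) -> wff Ran (Phi L).
Proof.
move=> xR H; apply: bigOr_wff => [|p pL]; first by rewrite /= xR.
apply: chi_wff; exact: H.
Qed.

Lemma Phi_sat L (t : asg) (G : sys) :
  (forall p, p \in L -> sys_wf p.2 /\ compatible p.1 p.2) -> sys_wf G -> compatible t G ->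
  csat (Phi L) [set t] G <-> exists p, p \in L /\ t = p.1 /\ sys_equiv p.2 G.
Proof.
move=> HL wG cG; rewrite /Phi bigOr_sat; split.
- move=> [/Bot_sat[]|[p [pL h]]]; exists p; split=> //.
  case: (HL p pL) => wp cp; exact/(chi_sat wp cp wG cG).
- move=> [p [pL h]]; right; exists p; split=> //.
  case: (HL p pL) => wp cp; exact/(chi_sat wp cp wG cG).
Qed.

End Chi.

End Proofs.

Lemma cwf1 (V D : finType) (Ran : V -> {set D}) (T : {set assignment Ran}) (F : sysraw Ran) s :
  cteam_wf T F -> s \in T -> cteam_wf [set s] F.
Proof. move=> [w c] sT; split=> // u /set1P ->; exact: c. Qed.

Lemma gwf1 (V D : finType) (Ran : V -> {set D}) (T : {set assignment Ran * sysraw Ran}) p :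
  gteam_wf T -> p \in T -> gteam_wf [set p].
Proof. move=> w pT q /set1P ->; exact: w. Qed.

Lemma restr1 (V D : finType) (Ran : V -> {set D}) (s : assignment Ran) (F H : sysraw Ran) :
  proj (restr [set (s, F)] H) = if sys_equiv F H then [set s] else set0.
Proof.
have -> : restr [set (s, F)] H = if sys_equiv F H then [set (s, F)] else set0.
  apply/setP => q; rewrite !inE; case: (boolP (q == (s, F))) => [/eqP -> /=|nq] /=.
  - by case: ifP; rewrite ?inE ?eqxx.
  - by case: ifP; rewrite ?inE ?(negbTE nq).
by rewrite /proj; case: ifP; rewrite ?imset_set1 ?imset0.
Qed.

Theorem theorem4p4 (V D : finType) (Ran : V -> {set D})
  (hDom : 0 < #|V|) (hRan : forall X : V, Ran X != set0) :
  (forall K : {set assignment Ran} -> sysraw Ran -> Prop,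
     cclass K -> (exists T F, K T F) ->
     ((exists phi : formula V D, wff Ran phi /\
         forall T F, cteam_wf T F -> (K T F <-> csat phi T F))
      <-> cflat K /\ cclosed K)) /\
  (forall K : {set (assignment Ran * sysraw Ran)} -> Prop,
     gclass K -> (exists T, K T) ->
     ((exists phi : formula V D, wff Ran phi /\
         forall T, gteam_wf T -> (K T <-> gsat phi T))
      <-> gflat K /\ gclosed K)).
Proof.
have [X0 _] := card_gt0P hDom.
have [x0 x0R] := set0Pn _ (hRan X0).
split.
- move=> K _ _; split.
  + move=> [phi [_ Hphi]]; split.
    * move=> T F wT; rewrite (Hphi T F wT) csat_flat.
      by split=> H s sT; [apply/(Hphi _ _ (cwf1 wT sT)) | apply/(Hphi _ _ (cwf1 wT sT))]; apply: H.
    * move=> T F S G wT wS _ _ E eTS KT; subst S.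
      apply/(Hphi T G wS); apply/csat_flat => s sT.
      have := proj1 (Hphi T F wT) KT; move/csat_flat/(_ s sT).
      have [wF cF] := wT; have [wG cG] := wS.
      by rewrite (c_equiv phi (cF s sT) (cG s sT) E).
  + move=> [Kf Kc].
    pose L := [seq p <- enum {: assignment Ran * sysraw Ran} |
                pb (K [set p.1] p.2 /\ cteam_wf [set p.1] p.2)].
    have HL : forall p, p \in L -> (K [set p.1] p.2 /\ cteam_wf [set p.1] p.2).
      by move=> p; rewrite mem_filter => /andP[/pbP].
    have HL' : forall p, p \in L -> sys_wf p.2 /\ compatible p.1 p.2.
      move=> p /HL [_ [w c]]; split=> //; exact: c (set11 _).
    exists (Phi X0 x0 L); split.
      by apply: Phi_wff => // p /HL' [].
    move=> T G wT; rewrite (Kf T G wT) csat_flat.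
    have [wG cG] := wT.
    have key : forall t, t \in T -> (K [set t] G <-> csat (Phi X0 x0 L) [set t] G).
      move=> t tT; rewrite Phi_sat //; last exact: cG.
      split=> [Kt|[[s F] [pL [/= ts E]]]].
      * exists (t, G); split; last by split=> //; exact: equiv_refl.
        rewrite mem_filter mem_enum andbT; apply/pbP; split=> //; exact: cwf1 wT tT.
      * subst s; have [K1 w1] := HL _ pL.
        apply: (Kc [set t] F [set t] G) => //; first exact: cwf1 wT tT.
        - by apply/set0Pn; exists t; exact: set11.
        - by apply/set0Pn; exists t; exact: set11.
    by split=> H t tT; [apply/(key t tT) | apply/(key t tT)]; apply: H.
- move=> K _ _; split.
  + move=> [phi [_ Hphi]]; split.
    * move=> T wT; rewrite (Hphi T wT) gsat_flat.
      by split=> H p pT; [apply/(Hphi _ (gwf1 wT pT)) | apply/(Hphi _ (gwf1 wT pT))]; apply: H.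
    * move=> T S wT wS E KT.
      apply/(Hphi S wS); apply/gsat_flat => [[s G]] pS.
      have [wG cG] := wS _ pS.
      have : s \in proj (restr S G).
        by apply/imsetP; exists (s, G) => //; rewrite inE pS /= equiv_refl.
      rewrite -E // => /imsetP [[s' F] /=]; rewrite inE => /andP[qT /= EFG] ss; subst s'.
      have := proj1 (Hphi T wT) KT; move/gsat_flat/(_ _ qT).
      have [wF cF] := wT _ qT.
      by rewrite !g_c (c_equiv phi cF cG EFG).
  + move=> [Kf Kc].
    pose L := [seq p <- enum {: assignment Ran * sysraw Ran} |
                pb (K [set p] /\ gteam_wf [set p])].
    have HL : forall p, p \in L -> (K [set p] /\ gteam_wf [set p]).
      by move=> p; rewrite mem_filter => /andP[/pbP].
    have HL' : forall p, p \in L -> sys_wf p.2 /\ compatible p.1 p.2.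
      move=> p /HL [_ w]; exact: w (set11 _).
    exists (Phi X0 x0 L); split.
      by apply: Phi_wff => // p /HL' [].
    move=> T wT; rewrite (Kf T wT) gsat_flat.
    have key : forall p, p \in T -> (K [set p] <-> gsat (Phi X0 x0 L) [set p]).
      move=> [t G] pT; have [wG cG] := wT _ pT.
      rewrite g_c Phi_sat //.
      split=> [Kt|[[s F] [pL [/= ts E]]]].
      * exists (t, G); split; last by split=> //; exact: equiv_refl.
        rewrite mem_filter mem_enum andbT; apply/pbP; split=> //; exact: gwf1 wT pT.
      * subst s; have [K1 w1] := HL _ pL.
        have [wF cF] := w1 _ (set11 _).
        apply: (Kc [set (t, F)]) => //; first exact: gwf1 wT pT.
        move=> H wH; rewrite !restr1 (equiv_trans wF wG wH E) //.
    by split=> H p pT; [apply/(key p pT) | apply/(key p pT)]; apply: H.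
Qed.
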